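(* Every tree of diameter $5$ is odd-graceful.
   Context: A graph $G$ with $n$ edges is odd-graceful if there is an injective map $f:V(G)\to\{0,1,2,\dots,2n-1\}$ such that the set of induced edge weights $\{|f(x)-f(y)| : xy\in E(G)\}$ equals $\{1,3,5,\dots,2n-1\}$. *)

(* Defs.v *)
From mathcomp Require Import all_boot.
Set Implicit Arguments. Unset Strict Implicit. Unset Printing Implicit Defensive.

Definition simple_graph (T : finType) (e : rel T) : Prop :=
  irreflexive e /\ symmetric e.

Definition edges (T : finType) (e : rel T) : {set {set T}} :=
  [set [set x; y] | x in T, y in T & e x y].

Definition walk_len (T : finType) (e : rel T) (x y : T) (k : nat) : Prop :=
  exists p : seq T, [/\ path e x p, last x p = y & size p = k].

Definition dist_is (T : finType) (e : rel T) (x y : T) (d : nat) : Prop :=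
  walk_len e x y d /\ forall k, walk_len e x y k -> d <= k.

Definition connected_graph (T : finType) (e : rel T) : Prop :=
  forall x y : T, exists k, walk_len e x y k.

Definition is_tree (T : finType) (e : rel T) : Prop :=
  [/\ simple_graph e, 0 < #|T|, connected_graph e & #|edges e| = #|T| - 1].

Definition diameter_is (T : finType) (e : rel T) (d : nat) : Prop :=
  connected_graph e /\
  (forall x y k, dist_is e x y k -> k <= d) /\
  (exists x y, dist_is e x y d).

Definition odd_graceful (T : finType) (e : rel T) : Prop :=
  exists f : T -> nat,
    [/\ injective f,
        (forall x, f x < 2 * #|edges e|) &
        (forall k, (exists x y, e x y /\ maxn (f x) (f y) - minn (f x) (f y) = k) <->
                   (odd k /\ k < 2 * #|edges e|))].

(* Main.v *)
Require Import Defs.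
From mathcomp Require Import all_boot.
From mathcomp Require Import zify.
Set Implicit Arguments. Unset Strict Implicit. Unset Printing Implicit Defensive.
Section Walks.
Variables (T : finType) (e : rel T).
Hypothesis esym : symmetric e.

Lemma walk0 x : walk_len e x x 0.
Proof. by exists [::]. Qed.

Lemma walk_cons x z y k : e x z -> walk_len e z y k -> walk_len e x y k.+1.
Proof.
move=> hxz [p [hp hl hs]]; exists (z :: p); split => /=; by rewrite ?hxz ?hs.
Qed.

Lemma walk_cat x y z k1 k2 :
  walk_len e x y k1 -> walk_len e y z k2 -> walk_len e x z (k1 + k2).
Proof.
move=> [p [hp hl hs]] [q [hq hl' hs']]; exists (p ++ q); split.
- by rewrite cat_path hp hl hq.
- by rewrite last_cat hl.
- by rewrite size_cat hs hs'.
Qed.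

Lemma walk_rev x y k : walk_len e x y k -> walk_len e y x k.
Proof.
move=> [p]; elim: p x k => [|a p IH] x k [hp hl hs] /=.
- move: hl hs => /= -> <-; exact: walk0.
- move: hp => /= /andP [hxa hp].
  have h : walk_len e y a (size p) by apply: IH; split.
  rewrite -hs /= -addn1; apply: walk_cat h _; apply: walk_cons (walk0 x).
  by rewrite esym.
Qed.

Definition wb x y k := [exists t : k.-tuple T, path e x t && (last x t == y)].

Lemma wbP x y k : reflect (walk_len e x y k) (wb x y k).
Proof.
apply: (iffP existsP) => [[t /andP [hp /eqP hl]] | [p [hp hl hs]]].
- by exists t; rewrite size_tuple.
- have sz : size p == k by rewrite hs.
  by exists (Tuple sz); rewrite /= hp hl eqxx.
Qed.

Hypothesis conn : connected_graph e.

Lemma exwb z u : exists k, wb z u k.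
Proof. by have [k hk] := conn z u; exists k; apply/wbP. Qed.

Lemma dist_ex x y : exists k, dist_is e x y k.
Proof.
exists (ex_minn (exwb x y)); case: ex_minnP => m /wbP hm hmin; split => // k /wbP.
exact: hmin.
Qed.

Variable u : T.

Definition lvl z := ex_minn (exwb z u).

Lemma lvlP z : walk_len e z u (lvl z).
Proof. by rewrite /lvl; case: ex_minnP => m /wbP. Qed.

Lemma lvl_min z k : walk_len e z u k -> lvl z <= k.
Proof. by rewrite /lvl; case: ex_minnP => m _ hm /wbP /hm. Qed.

Lemma lvl_u : lvl u = 0.
Proof. apply/eqP; rewrite -leqn0; apply: lvl_min; exact: walk0. Qed.

Lemma lvl0 z : lvl z = 0 -> z = u.
Proof.
move=> h; have [p [_ hl hs]] := lvlP z; move: hl hs; rewrite h.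
by case: p => [|a p] /= hl hs.
Qed.

Lemma lvl_edge x y : e x y -> lvl x <= (lvl y).+1.
Proof. by move=> hxy; apply: lvl_min; apply: walk_cons hxy (lvlP y). Qed.

Lemma par_ex z : z != u -> exists w, e z w && ((lvl w).+1 == lvl z).
Proof.
move=> hz; have [p [hp hl hs]] := lvlP z.
case: p hp hl hs => [|w p] /= hp hl hs.
- by move: hz; rewrite hl eqxx.
- move/andP: hp => [hzw hp]; exists w; rewrite hzw /=.
  have h1 : lvl w <= size p by apply: lvl_min; exists p.
  have h2 := lvl_edge hzw.
  apply/eqP; lia.
Qed.

Definition par z := if [pick w | e z w && ((lvl w).+1 == lvl z)] is Some w then w else z.

Lemma parP z : z != u -> e z (par z) /\ (lvl (par z)).+1 = lvl z.
Proof.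
rewrite /par; case: pickP => [w /andP [h1 /eqP h2] _ | hn hz] //.
by have [w hw] := par_ex hz; rewrite hn in hw.
Qed.

Lemma lvl_pos z : z != u -> 0 < lvl z.
Proof. by move=> hz; case: (parP hz) => _ <-. Qed.

Lemma lvl_posE z : (0 < lvl z) = (z != u).
Proof.
apply/idP/idP => [h|]; last exact: lvl_pos.
by apply/eqP => hz; move: h; rewrite hz lvl_u.
Qed.

Hypothesis irr : irreflexive e.
Hypothesis card : #|edges e| = #|T| - 1.

Definition pe z : {set T} := [set z; par z].

Lemma pe_inj : {in [set~ u] &, injective pe}.
Proof.
move=> z z' hz hz' heq.
rewrite !in_setC1 in hz hz'.
have: z \in pe z' by rewrite -heq /pe !inE eqxx.
have: z' \in pe z by rewrite heq /pe !inE eqxx.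
rewrite /pe !inE => /orP [/eqP -> // | /eqP h1] /orP [/eqP -> // | /eqP h2].
have := parP hz; have := parP hz'; rewrite -h1 -h2 => [[_ a] [_ b]]; lia.
Qed.

Lemma edge_par x y : e x y -> (x != u /\ y = par x) \/ (y != u /\ x = par y).
Proof.
move=> hxy.
have sub : pe @: [set~ u] \subset edges e.
  apply/subsetP => _ /imsetP [z hz ->].
  rewrite in_setC1 in hz; have [h _] := parP hz.
  by apply/imset2P; exists z (par z); rewrite ?inE.
have eq : pe @: [set~ u] = edges e.
  apply/eqP; rewrite eqEcard sub card_in_imset ?cardsC1 ?card //; first by lia.
  exact: pe_inj.
have : [set x; y] \in edges e by apply/imset2P; exists x y; rewrite ?inE.
rewrite -eq => /imsetP [z hz hxyz].
rewrite in_setC1 in hz.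
have hne : x != y by apply: contraTneq hxy => ->; rewrite irr.
have hx : x \in pe z by rewrite -hxyz !inE eqxx.
have hy : y \in pe z by rewrite -hxyz !inE eqxx orbT.
move: hx hy hne; rewrite /pe !inE => /orP [/eqP -> | /eqP ->] /orP [/eqP -> | /eqP ->];
  rewrite ?eqxx //; by auto.
Qed.


Definition a1 z := iter (lvl z).-1 par z.

Lemma lvl_iter z j : j <= lvl z -> lvl (iter j par z) = lvl z - j.
Proof.
elim: j => [|j IH] hj /=; first by rewrite subn0.
have h := IH (ltnW hj).
have hw : iter j par z != u by rewrite -lvl_posE h; lia.
have [_ hp] := parP hw; lia.
Qed.

Lemma walk_iter z j : j <= lvl z -> walk_len e z (iter j par z) j.
Proof.
elim: j => [|j IH] hj /=; first exact: walk0.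
have h := lvl_iter (ltnW hj).
have hw : iter j par z != u by rewrite -lvl_posE h; lia.
have [he _] := parP hw.
rewrite -addn1; apply: walk_cat (IH (ltnW hj)) _; apply: walk_cons he (walk0 _).
Qed.

Lemma a1_par z : 1 < lvl z -> a1 (par z) = a1 z.
Proof.
move=> hz; have hz' : z != u by rewrite -lvl_posE; lia.
have [_ hp] := parP hz'.
rewrite /a1 -hp /=.
have : 0 < lvl (par z) by lia.
case: (lvl (par z)) => [|k] //= _. rewrite -iterS iterSr. by [].
Qed.

Lemma a1_const x p : path e x p -> u \notin x :: p -> a1 (last x p) = a1 x.
Proof.
elim: p x => [|a p IH] x //= /andP [hxa hp].
rewrite in_cons negb_or => /andP [hx hap].
have ha : u != a by move: hap; rewrite in_cons negb_or => /andP [].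
rewrite (IH a hp hap).
rewrite eq_sym in hx; rewrite eq_sym in ha.
have pa := lvl_pos ha; have px := lvl_pos hx.
case: (edge_par hxa) => [[_ e1] | [_ e1]].
- rewrite e1 in pa *; apply: a1_par; have [_ h] := parP hx; lia.
- rewrite e1 in px *; symmetry; apply: a1_par; have [_ h] := parP ha; lia.
Qed.

Lemma far x y k : a1 x != a1 y -> walk_len e x y k -> lvl x + lvl y <= k.
Proof.
move=> hne [p [hp hl hs]].
case: (boolP (u \in x :: p)) => hu; last first.
  by move: hne; rewrite -hl (a1_const hp hu) eqxx.
rewrite in_cons in hu.
case/orP: hu => [/eqP hux | hu].
  subst x; rewrite lvl_u add0n; apply: lvl_min; apply: walk_rev; exists p; by split.
move: hp hl hs; case/splitPr: hu => p1 p2 hp hl hs.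
rewrite cat_path /= in hp; case/and3P: hp => hp1 hu hp2.
have h1 : lvl x <= (size p1).+1.
  apply: lvl_min; exists (rcons p1 u); split.
  - by rewrite rcons_path hp1 hu.
  - by rewrite last_rcons.
  - by rewrite size_rcons.
have h2 : lvl y <= size p2.
  apply: lvl_min; apply: walk_rev; exists p2; split => //; by rewrite last_cat in hl.
have hs2 : k = (size p1 + size p2).+1 by rewrite -hs size_cat addnS. lia.
Qed.

Lemma setup a b : dist_is e a b 5 -> lvl a <= 2 -> lvl b <= 3 ->
  [/\ lvl a = 2, lvl b = 3 & a1 a != a1 b].
Proof.
move=> [hw hmin] ha hb.
have h5 : 5 <= lvl a + lvl b by apply: hmin; apply: walk_cat (lvlP a) (walk_rev (lvlP b)).
have la : lvl a = 2 by lia.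
have lb : lvl b = 3 by lia.
split => //; apply/eqP => heq.
have w1 : walk_len e a (a1 a) 1 by rewrite /a1 la; apply: walk_iter; rewrite la.
have w2 : walk_len e b (a1 b) 2 by rewrite /a1 lb; apply: walk_iter; rewrite lb.
rewrite heq in w1.
by have := hmin _ (walk_cat w1 (walk_rev w2)).
Qed.

Lemma structure a b :
  (forall z, exists2 k, k <= 5 & walk_len e z a k) ->
  (forall z, exists2 k, k <= 5 & walk_len e z b k) ->
  lvl a = 2 -> lvl b = 3 -> a1 a != a1 b ->
  [/\ lvl (a1 b) = 1, forall z, lvl z <= 3 & forall z, lvl z = 3 -> par (par z) = a1 b].
Proof.
move=> da db la lb hab.
have lv : lvl (a1 b) = 1 by rewrite /a1 lvl_iter ?leq_pred // lb.
have key : forall z, lvl z <= 3 /\ (lvl z = 3 -> a1 z = a1 b).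
  move=> z; have [k1 hk1 w1] := da z; have [k2 hk2 w2] := db z.
  case: (eqVneq (a1 z) (a1 a)) => hza.
  - have hzb : a1 z != a1 b by rewrite hza.
    have h := far hzb w2; lia.
  - have h := far hza w1.
    split; first lia.
    move=> h3; apply/eqP; apply/negPn/negP => hzb.
    have := far hzb w2; lia.
split => // z.
- by case: (key z).
- move=> h3; have [_ h] := key z; by rewrite -(h h3) /a1 h3.
Qed.

End Walks.
Lemma lt_lex M a b a' b' : b < M -> a < a' -> a*M + b < a'*M + b'.
Proof. move=> h1 h2; nia. Qed.

Section Label.
Variables (T : finType) (e : rel T) (u v : T) (par : T -> T) (lvl : T -> nat).
Hypothesis H0 : forall z, (0 < lvl z) = (z != u).
Hypothesis Hp : forall z, z != u -> e z (par z) /\ (lvl (par z)).+1 = lvl z.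
Hypothesis H3 : forall z, lvl z <= 3.
Hypothesis Hv : lvl v = 1.
Hypothesis Hvv : forall z, lvl z = 3 -> par (par z) = v.
Hypothesis He : forall x y, e x y -> (x != u /\ y = par x) \/ (y != u /\ x = par y).
Hypothesis Hc : #|edges e| = #|T| - 1.

Definition M := #|T|.
Definition idx (z : T) : nat := enum_rank z.
Lemma idx_lt z : idx z < M. Proof. rewrite /M; exact: ltn_ord. Qed.
Lemma idx_inj : injective idx.
Proof. by move=> x y h; apply: enum_rank_inj; apply: val_inj. Qed.
Lemma Mpos : 0 < M. Proof. by rewrite /M; apply/card_gt0P; exists u. Qed.

Definition key c a b := (c * M + a) * M + b.

Lemma key_lt c a b c' a' b' : a < M -> b < M ->
  (c < c') || ((c == c') && ((a < a') || ((a == a') && (b < b')))) ->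
  key c a b < key c' a' b'.
Proof.
rewrite /key => ha hb /orP [h | /andP [/eqP <- /orP [h | /andP [/eqP <- h]]]].
- by apply: lt_lex => //; apply: lt_lex.
- by apply: lt_lex => //; lia.
- lia.
Qed.

Lemma key_inj c a b c' a' b' : a < M -> b < M -> a' < M -> b' < M ->
  key c a b = key c' a' b' -> [/\ c = c', a = a' & b = b'].
Proof.
move=> ha hb ha' hb' heq.
have h1 := @key_lt c a b c' a' b' ha hb.
have h2 := @key_lt c' a' b' c a b ha' hb'.
rewrite heq ltnn in h1 h2.
split; lia.
Qed.

Definition cls z := if lvl z == 3 then 0 else if lvl z == 2 then (if par z == v then 4 else 1)
  else if z == v then 3 else 2.
Definition s1 z := if lvl z == 3 then idx (par z) else if lvl z == 2 then
  (if par z == v then M.-1 - idx z else idx (par z)) else if z == v then 0 else M.-1 - idx z.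
Definition s2 z := if lvl z == 3 then idx z else if lvl z == 2 then
  (if par z == v then 0 else idx z) else 0.
Definition K z := key (cls z) (s1 z) (s2 z).

Lemma s1_lt z : s1 z < M.
Proof.
have := idx_lt z; have := idx_lt (par z); have := Mpos.
rewrite /s1; do 3?[case: ifP => _]; lia.
Qed.
Lemma s2_lt z : s2 z < M.
Proof.
have := idx_lt z; have := Mpos.
rewrite /s2; do 3?[case: ifP => _]; lia.
Qed.

Lemma K_cls z z' : cls z < cls z' -> K z < K z'.
Proof. by move=> h; apply: key_lt; rewrite ?s1_lt ?s2_lt ?h. Qed.

Lemma nu z : 0 < lvl z -> z != u. Proof. by rewrite H0. Qed.

Lemma par1 z : lvl z = 1 -> par z = u.
Proof.
move=> h; have hz : z != u by rewrite -H0 h.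
have [_ hp] := Hp hz. apply/eqP; apply/negPn; rewrite -H0; lia.
Qed.
Lemma par2 z : lvl z = 2 -> lvl (par z) = 1.
Proof. move=> h; have hz : z != u by rewrite -H0 h. have [_ hp] := Hp hz; lia. Qed.
Lemma par3 z : lvl z = 3 -> lvl (par z) = 2.
Proof. move=> h; have hz : z != u by rewrite -H0 h. have [_ hp] := Hp hz; lia. Qed.

Lemma vu : v != u. Proof. by rewrite -H0 Hv. Qed.

Lemma cls_cases z : z != u ->
  (lvl z = 3 /\ cls z = 0) \/ [/\ lvl z = 2, par z != v & cls z = 1] \/
      [/\ lvl z = 1, z != v & cls z = 2] \/ (z = v /\ cls z = 3) \/
      [/\ lvl z = 2, par z = v & cls z = 4].
Proof.
move=> hz; have := H3 z; rewrite -H0 in hz.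
rewrite /cls; case: (lvl z) hz => [|[|[|[|n]]]] //= _ _.
- case: eqP => [->|/eqP h]; [by right; right; right; left | by right; right; left].
- case: eqP => [->|/eqP h]; [by right; right; right; right | by right; left].
- by left.
Qed.

Definition NR := [set~ u].
Definition W z := #|[set z' in NR | K z' < K z]|.

Lemma W_mono z z' : z' != u -> K z' < K z -> W z' < W z.
Proof.
move=> hz' hK; apply: proper_card; apply/properP; split.
- apply/subsetP => w; rewrite !inE => /andP [h1 h2]; rewrite h1 /=; exact: ltn_trans h2 hK.
- by exists z'; rewrite !inE ?hz' ?hK //= ltnn.
Qed.

Lemma W_lt z : z != u -> W z < M - 1.
Proof.
move=> hz; have h : #|NR| = M - 1 by rewrite cardsC1 /M; have := Mpos; rewrite /M; lia.
rewrite -h.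
apply: proper_card; apply/properP; split.
- by apply/subsetP => w; rewrite !inE => /andP [].
- by exists z; rewrite !inE ?hz //= ltnn.
Qed.

Lemma K_inj z z' : z != u -> z' != u -> K z = K z' -> z = z'.
Proof.
move=> hz hz' hK.
have [hc h1 h2] := key_inj (s1_lt z) (s2_lt z) (s1_lt z') (s2_lt z') hK.
have := idx_lt z; have := idx_lt z'; have := Mpos.
move: hc h1 h2; rewrite /cls /s1 /s2.
case: (cls_cases hz) => [[l c]|[[l p c]|[[l p c]|[[-> c]|[l p c]]]]];
case: (cls_cases hz') => [[l' c']|[[l' p' c']|[[l' p' c']|[[-> c']|[l' p' c']]]]];
rewrite ?l ?l' ?p ?p' ?Hv ?eqxx ?(negbTE p) ?(negbTE p') /=; try (move=> *; lia);
try (move=> *; apply: idx_inj; lia).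
Qed.

Lemma Wneq z z' : z != u -> z' != u -> z != z' -> W z != W z'.
Proof.
move=> hz hz' hne; case: (ltngtP (K z) (K z')) => h.
- by rewrite neq_ltn (W_mono hz h).
- by rewrite neq_ltn (W_mono hz' h) orbT.
- by rewrite (K_inj hz hz' h) eqxx in hne.
Qed.

Lemma WltK z z' : z != u -> z' != u -> W z < W z' -> K z < K z'.
Proof.
move=> hz hz' hW; case: (ltngtP (K z) (K z')) => // h.
- have := W_mono hz' h; lia.
- by move: hW; rewrite (K_inj hz hz' h) ltnn.
Qed.

Lemma key_le c a b a' b' : a < M -> b < M -> a' < M -> b' < M ->
  key c a b < key c a' b' -> a <= a'.
Proof.
move=> ha hb ha' hb' h; rewrite leqNgt; apply/negP => h'.
have h2 : key c a' b' < key c a b by apply: key_lt => //; rewrite eqxx h' orbT.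
lia.
Qed.

Lemma clsu : cls u = 2.
Proof.
have h : lvl u = 0 by apply/eqP; rewrite -leqn0 leqNgt H0 negbK.
by rewrite /cls h /= eq_sym (negbTE vu).
Qed.
Lemma clsv : cls v = 3. Proof. by rewrite /cls Hv eqxx. Qed.
Lemma clsX z : lvl z = 1 -> z != v -> cls z = 2.
Proof. by move=> h hv; rewrite /cls h (negbTE hv). Qed.
Lemma clsY z : lvl z = 2 -> par z = v -> cls z = 4.
Proof. by move=> h hv; rewrite /cls h hv /= eqxx. Qed.
Lemma clsXL z : lvl z = 2 -> par z != v -> cls z = 1.
Proof. by move=> h hv; rewrite /cls h (negbTE hv). Qed.
Lemma clsYL z : lvl z = 3 -> cls z = 0.
Proof. by move=> h; rewrite /cls h. Qed.

Lemma KX z : lvl z = 1 -> z != v -> K z = key 2 (M.-1 - idx z) 0.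
Proof. by move=> h hv; rewrite /K /cls /s1 /s2 h (negbTE hv). Qed.
Lemma KY z : lvl z = 2 -> par z = v -> K z = key 4 (M.-1 - idx z) 0.
Proof. by move=> h hv; rewrite /K /cls /s1 /s2 h hv /= eqxx. Qed.
Lemma KXL z : lvl z = 2 -> par z != v -> K z = key 1 (idx (par z)) (idx z).
Proof. by move=> h hv; rewrite /K /cls /s1 /s2 h (negbTE hv). Qed.
Lemma KYL z : lvl z = 3 -> K z = key 0 (idx (par z)) (idx z).
Proof. by move=> h; rewrite /K /cls /s1 /s2 h. Qed.

Lemma clsnu z c : cls z = c -> c != 2 -> z != u.
Proof. by move=> h hc; apply/eqP => hz; move: hc; rewrite -h hz clsu. Qed.

Lemma clsv_eq z : z != u -> cls z = 3 -> z = v.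
Proof.
move=> hz c; case: (cls_cases hz) => [[_ c2]|[[_ _ c2]|[[_ _ c2]|[[-> _]|[_ _ c2]]]]] //; lia.
Qed.

Definition f z := if z == u then 2 * W v + 1
  else if lvl z == 1 then (if z == v then 0 else 2 * W v - 2 * W z)
  else if lvl z == 2 then (if par z == v then 2 * W z + 1
                          else 2 * W v - 2 * W (par z) + 2 * W z + 1)
  else 2 * W (par z) - 2 * W z.

Lemma fu : f u = 2 * W v + 1. Proof. by rewrite /f eqxx. Qed.
Lemma fv : f v = 0. Proof. by rewrite /f (negbTE vu) Hv /= eqxx. Qed.
Lemma fX z : lvl z = 1 -> z != v -> f z = 2 * W v - 2 * W z.
Proof. move=> h hv; have hz : z != u by rewrite -H0 h.
by rewrite /f (negbTE hz) h ?(negbTE hv). Qed.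
Lemma fY z : lvl z = 2 -> par z = v -> f z = 2 * W z + 1.
Proof. move=> h hv; have hz : z != u by rewrite -H0 h.
by rewrite /f (negbTE hz) h ?hv /= ?eqxx. Qed.
Lemma fXL z : lvl z = 2 -> par z != v -> f z = 2 * W v - 2 * W (par z) + 2 * W z + 1.
Proof. move=> h hv; have hz : z != u by rewrite -H0 h.
by rewrite /f (negbTE hz) h ?(negbTE hv). Qed.
Lemma fYL z : lvl z = 3 -> f z = 2 * W (par z) - 2 * W z.
Proof. move=> h; have hz : z != u by rewrite -H0 h.
by rewrite /f (negbTE hz) h. Qed.

Lemma WX z : lvl z = 1 -> z != v -> W z < W v.
Proof.
move=> h hv; apply: W_mono; first by rewrite -H0 h.
by apply: K_cls; rewrite clsv (clsX h hv).
Qed.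
Lemma WY z : lvl z = 2 -> par z = v -> W v < W z.
Proof.
move=> h hv; apply: W_mono; first exact: vu.
by apply: K_cls; rewrite clsv (clsY h hv).
Qed.
Lemma WXL z : lvl z = 2 -> par z != v -> W z < W (par z) /\ W (par z) < W v.
Proof.
move=> h hv; have hp := par2 h; split; last exact: WX.
apply: W_mono; first by rewrite -H0 h.
by apply: K_cls; rewrite (clsX hp hv) (clsXL h hv).
Qed.
Lemma WYL z : lvl z = 3 -> [/\ W z < W (par z), W v < W (par z) & W (par z) < M - 1].
Proof.
move=> h; have hp := par3 h; have hvv := Hvv h; split; last 1 first.
- by apply: W_lt; rewrite -H0 hp.
- apply: W_mono; first by rewrite -H0 h.
  by apply: K_cls; rewrite (clsY hp hvv) (clsYL h).
- exact: WY.
Qed.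

Lemma shape z : z != u ->
  (cls z = 3 /\ f z = 0)
  \/ (cls z = 2 /\ f z = 2 * W v - 2 * W z /\ W z < W v)
  \/ (cls z = 1 /\ f z = 2 * W v - 2 * W (par z) + 2 * W z + 1 /\ W z < W (par z) /\ W (par z) < W v)
  \/ (cls z = 4 /\ f z = 2 * W z + 1 /\ W v < W z)
  \/ (cls z = 0 /\ f z = 2 * W (par z) - 2 * W z /\ W z < W (par z) /\ W v < W (par z)
        /\ W (par z) < M - 1).
Proof.
move=> hz; case: (cls_cases hz) => [[l c]|[[l p c]|[[l p c]|[[-> c]|[l p c]]]]].
- have [h1 h2 h3] := WYL l; right; right; right; right; by rewrite c fYL.
- have [h1 h2] := WXL l p; right; right; left; by rewrite c fXL.
- right; left; by rewrite c fX // WX.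
- by left; rewrite c fv.
- right; right; right; left; by rewrite c fY // WY.
Qed.

Lemma XYL x l : x != u -> cls x = 2 -> cls l = 0 -> W l < W x.
Proof.
move=> hx cx cl; apply: W_mono; first exact: clsnu cl _.
by apply: K_cls; rewrite cx cl.
Qed.

Lemma XLXL z z' : cls z = 1 -> cls z' = 1 -> W z < W z' -> W (par z') <= W (par z).
Proof.
move=> c c' hW.
have hz : z != u by exact: clsnu c _.
have hz' : z' != u by exact: clsnu c' _.
have [l p] : lvl z = 2 /\ par z != v.
  by case: (cls_cases hz) => [[_ c2]|[[l p _]|[[_ _ c2]|[[_ c2]|[_ _ c2]]]]]; try lia; split.
have [l' p'] : lvl z' = 2 /\ par z' != v.
  by case: (cls_cases hz') => [[_ c2]|[[l2 p2 _]|[[_ _ c2]|[[_ c2]|[_ _ c2]]]]]; try lia; split.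
have hK := WltK hz hz' hW.
rewrite (KXL l p) (KXL l' p') in hK.
have hle := key_le (idx_lt _) (idx_lt _) (idx_lt _) (idx_lt _) hK.
case: (eqVneq (par z) (par z')) => [<- //| hne].
have hlt : idx (par z) < idx (par z').
  rewrite ltn_neqAle hle andbT; apply: contra hne => /eqP h; apply/eqP; exact: idx_inj h.
have hpz := par2 l; have hpz' := par2 l'.
have pu' : par z' != u by rewrite -H0 hpz'.
apply: ltnW; apply: W_mono pu' _.
rewrite (KX hpz p) (KX hpz' p'); apply: key_lt.
- have := Mpos; lia.
- exact: Mpos.
- rewrite ltnn eqxx /=; apply/orP; left; have := idx_lt (par z'). lia.
Qed.

Lemma YLYL z z' : cls z = 0 -> cls z' = 0 -> W z < W z' -> W (par z') <= W (par z).
Proof.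
move=> c c' hW.
have hz : z != u by exact: clsnu c _.
have hz' : z' != u by exact: clsnu c' _.
have l : lvl z = 3.
  by case: (cls_cases hz) => [[l _]|[[_ _ c2]|[[_ _ c2]|[[_ c2]|[_ _ c2]]]]]; try lia.
have l' : lvl z' = 3.
  by case: (cls_cases hz') => [[l2 _]|[[_ _ c2]|[[_ _ c2]|[[_ c2]|[_ _ c2]]]]]; try lia.
have hK := WltK hz hz' hW.
rewrite (KYL l) (KYL l') in hK.
have hle := key_le (idx_lt _) (idx_lt _) (idx_lt _) (idx_lt _) hK.
case: (eqVneq (par z) (par z')) => [<- //| hne].
have hlt : idx (par z) < idx (par z').
  rewrite ltn_neqAle hle andbT; apply: contra hne => /eqP h; apply/eqP; exact: idx_inj h.
have hpz := par3 l; have hpz' := par3 l'.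
have pu' : par z' != u by rewrite -H0 hpz'.
apply: ltnW; apply: W_mono pu' _.
rewrite (KY hpz (Hvv l)) (KY hpz' (Hvv l')); apply: key_lt.
- have := Mpos; lia.
- exact: Mpos.
- rewrite ltnn eqxx /=; apply/orP; left; have := idx_lt (par z'); lia.
Qed.

Lemma wt z : z != u -> maxn (f z) (f (par z)) - minn (f z) (f (par z)) = 2 * W z + 1.
Proof.
move=> hz; case: (cls_cases hz) => [[l c]|[[l p c]|[[l p c]|[[-> c]|[l p c]]]]].
- have hp := par3 l; have hvv := Hvv l.
  rewrite fYL // (fY hp hvv); have [h1 _ _] := WYL l; lia.
- have hp := par2 l; rewrite fXL // (fX hp p); have [h1 h2] := WXL l p; lia.
- rewrite (par1 l) fu fX //; have := WX l p; lia.
- rewrite (par1 Hv) fu fv; lia.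
- rewrite p fv fY //; lia.
Qed.

Lemma W_onto m : m < M - 1 -> exists2 z, z != u & W z = m.
Proof.
move=> hm.
have U : uniq [seq W z | z <- enum NR].
  rewrite map_inj_in_uniq ?enum_uniq // => x y; rewrite !mem_enum !in_setC1 => hx hy hW.
  case: (eqVneq x y) => // hne; have := Wneq hx hy hne; by rewrite hW eqxx.
have sub : {subset [seq W z | z <- enum NR] <= iota 0 (M - 1)}.
  move=> w /mapP [z]; rewrite mem_enum in_setC1 => hz ->.
  by rewrite mem_iota add0n W_lt.
have hsz : size (iota 0 (M - 1)) <= size [seq W z | z <- enum NR].
  by rewrite size_iota size_map -cardE cardsC1 -/M; have := Mpos; lia.
have [_ eqs] := uniq_min_size U sub hsz.
have : m \in iota 0 (M - 1) by rewrite mem_iota.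
rewrite -eqs => /mapP [z]; rewrite mem_enum in_setC1 => hz ->.
by exists z.
Qed.

Theorem label : odd_graceful e.
Proof.
exists f; split.
- move=> z z' hf; apply/eqP; apply/negPn/negP => hne.
  case: (eqVneq z u) hne hf => [-> | hz] hne hf.
    have hz' : z' != u by rewrite eq_sym.
    case: (shape hz') => [[c2 f2]|[[c2 [f2 w2]]|[[c2 [f2 [w2 w2']]]|[[c2 [f2 w2]]|[c2 [f2 [w2 [w2' w2'']]]]]]]]; rewrite f2 fu in hf; lia.
  case: (eqVneq z' u) hne hf => [-> | hz'] hne hf.
    case: (shape hz) => [[c2 f2]|[[c2 [f2 w2]]|[[c2 [f2 [w2 w2']]]|[[c2 [f2 w2]]|[c2 [f2 [w2 [w2' w2'']]]]]]]]; rewrite f2 fu in hf; lia.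
  have hW := Wneq hz hz' hne.
  case: (shape hz) => [[c1 f1]|[[c1 [f1 w1]]|[[c1 [f1 [w1 w1']]]|[[c1 [f1 w1]]|[c1 [f1 [w1 [w1' w1'']]]]]]]];
  case: (shape hz') => [[c2 f2]|[[c2 [f2 w2]]|[[c2 [f2 [w2 w2']]]|[[c2 [f2 w2]]|[c2 [f2 [w2 [w2' w2'']]]]]]]];
  rewrite f1 f2 in hf; try lia.
  all: try (have := @XYL z z' hz c1 c2; lia).
  all: try (have := @XLXL z z' c1 c2; have := @XLXL z' z c2 c1; lia).
  all: try (have := @XYL z' z hz' c2 c1; lia).
  all: try (have := @YLYL z z' c1 c2; have := @YLYL z' z c2 c1; lia).
  by move: hne; rewrite (clsv_eq hz c1) (clsv_eq hz' c2) eqxx.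
- move=> z; rewrite Hc -/M; have := W_lt vu.
  case: (eqVneq z u) => [-> | hz]; first by rewrite fu; lia.
  have := W_lt hz; case: (shape hz) => [[c2 f2]|[[c2 [f2 w2]]|[[c2 [f2 [w2 w2']]]|[[c2 [f2 w2]]|[c2 [f2 [w2 [w2' w2'']]]]]]]]; rewrite f2; lia.
- move=> k; split.
  + move=> [x [y [hxy hk]]]; rewrite Hc -/M.
    case: (He hxy) => [[hx hy] | [hy hx]].
    * rewrite hy wt // in hk; rewrite -hk addn1 /= oddM /=; split => //.
      have := W_lt hx; lia.
    * rewrite hx maxnC minnC wt // in hk; rewrite -hk addn1 /= oddM /=; split => //.
      have := W_lt hy; lia.
  + move=> [ho hk]; rewrite Hc -/M in hk.
    have hk2 := odd_double_half k; rewrite ho -muln2 in hk2.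
    have [z hz hW] : exists2 z, z != u & W z = k./2 by apply: W_onto; lia.
    exists z, (par z); split; first by case: (Hp hz).
    rewrite wt //; lia.
Qed.

End Label.
Theorem theorem4 (T : finType) (e : rel T) :
  is_tree e -> diameter_is e 5 -> odd_graceful e.
Proof.
move=> [[irr esym] _ conn card] [_ [hk [a [b hab]]]].
have hab' := hab.
case: hab => [[p [hp hl hs]] _].
move: hs hp hl; case: p => [|a1' [|a2 [|a3 [|a4 [|a5 [|? ?]]]]]] //= _.
case/and5P => h1 h2 h3 h4 /andP [h5 _] hl.
have la : lvl conn a2 a <= 2.
  apply: lvl_min; apply: walk_cons h1 _; apply: walk_cons h2 _; exact: walk0.
have e54 : e a5 a4 by rewrite esym.
have e43 : e a4 a3 by rewrite esym.
have e32 : e a3 a2 by rewrite esym.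
have lb : lvl conn a2 b <= 3.
  apply: lvl_min; rewrite -hl.
  apply: walk_cons e54 _; apply: walk_cons e43 _; apply: walk_cons e32 _; exact: walk0.
have [la' lb' hne] := setup esym card hab' la lb.
have dd : forall c z, exists2 k, k <= 5 & walk_len e z c k.
  move=> c z; have [k hd] := dist_ex conn z c; exists k; [exact: (hk _ _ _ hd) | by case: hd].
have [hv hl3 hvv] := structure esym irr card (dd a) (dd b) la' lb' hne.
apply: (@label T e a2 (a1 conn a2 b) (par conn a2) (lvl conn a2)) => //.
- exact: lvl_posE.
- move=> z hz; exact: parP.
- move=> x y; exact: edge_par.
Qed.
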